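(* Let $X_1, \ldots, X_m$ be nonempty pairwise disjoint subsets of $A$, let $A' = \bigcup_{i=1}^m X_i$, and suppose that for every $1 \le i \le m$, $\left(\bigcup_{k=1}^{i-1} X_k\right) \leadsto X_i$. Then for every $S' \subseteq S$, $$\Psi_{A'}(S') = (\Psi_{X_1} \oslash \cdots \oslash \Psi_{X_m})\big(\Omega_{A'}(S')\big).$$
   Context: Let $A$ be a finite set of agents. For each $a \in A$ let $S_a$ be a nonempty finite set, and $S = \prod_{a \in A} S_a$ the set of states. For each $a \in A$ let $\to_a \subseteq S \times S$ be a relation that is either empty or left-total, such that whenever $s \to_a s'$, either $s = s'$ or $s$ and $s'$ differ only in the $a$-component. For $X \subseteq A$ let $\to_X = \bigcup_{a \in X} \to_a$ (so $\to_\emptyset$ is empty) and $\to_X^*$ its reflexive-transitive closure; for $T \subseteq S$, $(T \to_X) = \{ t' : \exists t \in T,\ t \to_X t'\}$. Orbit operator: $\Omega_X(S') = \{ s' : \exists s \in S',\ s \to_X^* s'\}$. Equilibria operator: $\Psi_X(S') = \{ s \in \Omega_X(S') : \forall s' \in S,\ s \to_X^* s' \implies s' \to_X^* s \}$. $M$-relation: $X \leadsto Y$ iff for every $S' \subseteq S$, with $T = \Psi_X(\Psi_{X \cup Y}(S'))$, one has $(T \to_Y) \subseteq T$. For $X, Y \subseteq A$: let $\rightleftharpoons_X$ be the equivalence on $S$ with $s \rightleftharpoons_X s'$ iff $s \to_X^* s'$ and $s' \to_X^* s$; $[s]_X$ is the class of $s$ and $[S'']_X = \{[s]_X : s \in S''\}$.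 On classes, $c \Rightarrow_Y c'$ iff there exist $s \in c$, $s' \in c'$ with $s \to_Y s'$; $\Rightarrow_Y^*$ is its reflexive-transitive closure. For $S'' \subseteq S$, $[\widetilde{\Psi}_Y]_X(S'') = \{ e \in [S'']_X : \{e' : e \Rightarrow_Y^* e'\} \subseteq [S'']_X \text{ and } \forall e' \in [S]_X,\ e \Rightarrow_Y^* e' \implies e' \Rightarrow_Y^* e \}$, and $\mathsf{Flatten}(E) = \bigcup_{e \in E} e$ for a set $E$ of subsets of $S$. The iterated composition is defined recursively: $F_1 = \Psi_{X_1}$ and, for $2 \le k \le m$, $F_k(S'') = \mathsf{Flatten}\big([\widetilde{\Psi}_{X_k}]_{Y_{k-1}}(F_{k-1}(S''))\big)$ where $Y_{k-1} = X_1 \cup \cdots \cup X_{k-1}$; then $\Psi_{X_1} \oslash \cdots \oslash \Psi_{X_m} = F_m$. *)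

(* Defs.v *)
From mathcomp Require Import all_boot.
Set Implicit Arguments. Unset Strict Implicit. Unset Printing Implicit Defensive.

Section Defs.
Variable A : finType.
Variable Sa : A -> finType.

Definition St := {dffun forall a : A, Sa a}.

Variable R : forall a : A, rel St.

Definition stepX (X : {set A}) : rel St := fun s s' => [exists a in X, R a s s'].

Definition reach (X : {set A}) : rel St := connect (stepX X).

Definition Omega (X : {set A}) (S' : {set St}) : {set St} :=
  [set s' | [exists s in S', reach X s s']].

Definition Psi (X : {set A}) (S' : {set St}) : {set St} :=
  [set s in Omega X S' | [forall s', reach X s s' ==> reach X s' s]].

Definition imgstep (Y : {set A}) (T : {set St}) : {set St} :=
  [set t' | [exists t in T, stepX Y t t']].

Definition Mrel (X Y : {set A}) : Prop :=
  forall S' : {set St}, let T := Psi X (Psi (X :|: Y) S') in imgstep Y T \subset T.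

Definition cls (X : {set A}) (s : St) : {set St} :=
  [set s' | reach X s s' && reach X s' s].

Definition clsset (X : {set A}) (S'' : {set St}) : {set {set St}} :=
  [set cls X s | s in S''].

Definition cstep (X Y : {set A}) : rel {set St} := fun c c' =>
  [&& c \in clsset X setT, c' \in clsset X setT &
      [exists s in c, exists s' in c', stepX Y s s']].

Definition creach (X Y : {set A}) : rel {set St} := connect (cstep X Y).

Definition tPsi (Y X : {set A}) (S'' : {set St}) : {set {set St}} :=
  [set e in clsset X S'' |
     [forall e', creach X Y e e' ==> (e' \in clsset X S'')] &&
     [forall e' in clsset X setT, creach X Y e e' ==> creach X Y e' e]].

Definition Flatten (E : {set {set St}}) : {set St} := \bigcup_(e in E) e.

(* F_k for k >= 2, given Y = Y_{k-1}, remaining list [X_k; ...; X_m] and current F_{k-1}(S'') *)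
Fixpoint compAux (Y : {set A}) (Xs : seq {set A}) (cur : {set St}) : {set St} :=
  match Xs with
  | [::] => cur
  | X :: r => compAux (Y :|: X) r (Flatten (tPsi X Y cur))
  end.

Definition compPsi (Xs : seq {set A}) (S'' : {set St}) : {set St} :=
  match Xs with
  | [::] => S''  (* not used: the statement requires m >= 1 *)
  | X1 :: r => compAux X1 r (Psi X1 S'')
  end.

End Defs.

(* Main.v *)
Require Import Defs.
From mathcomp Require Import all_boot.

Set Implicit Arguments. Unset Strict Implicit. Unset Printing Implicit Defensive.

Lemma connect_closed_sub (T : finType) (e : rel T) (W : {set T}) x y :
  (forall u v, u \in W -> e u v -> v \in W) -> x \in W -> connect e x y -> y \in W.
Proof.
move=> H xW /connectP [p pth ->]; elim: p x pth xW => //= z p IH x /andP[exz pth] xW.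
by apply: IH pth _; apply: H xW exz.
Qed.

Lemma exists_rec (T : finType) (e : rel T) s :
  exists t, connect e s t /\ (forall u, connect e t u -> connect e u t).
Proof.
have Ps : connect e s s by [].
case: (arg_minnP (fun t => #|[set u | connect e t u]|) Ps) => t st tmin.
exists t; split => // u tu.
have su : connect e s u by apply: connect_trans st tu.
have := tmin u su.
have sub : [set w | connect e u w] \subset [set w | connect e t w].
  by apply/subsetP => w; rewrite !inE => uw; apply: connect_trans tu uw.
move=> le; have /eqP eqs : [set w | connect e u w] == [set w | connect e t w].
  by rewrite eqEcard sub le.
have : t \in [set w | connect e t w] by rewrite inE.
by rewrite -eqs inE.
Qed.

Section S.
Context {A : finType} {Sa : A -> finType} (R : forall a : A, rel (St Sa)).
Implicit Types (X Y Z W : {set A}) (P : {set St Sa}) (s t u v p : St Sa).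

Definition recb (X : {set A}) (s : St Sa) := [forall s', reach R X s s' ==> reach R X s' s].

Lemma recP X s : reflect (forall t, reach R X s t -> reach R X t s) (recb X s).
Proof.
apply: (iffP forallP) => H t; first by move/(implyP (H t)).
by apply/implyP; apply: H.
Qed.

Lemma inPsi X (S' : {set St Sa}) s : (s \in Psi R X S') = (s \in Omega R X S') && recb X s.
Proof. by rewrite inE. Qed.

Lemma stepXU Y X s t : stepX R (Y :|: X) s t = stepX R Y s t || stepX R X s t.
Proof.
apply/existsP/orP.
  by case=> a /andP[]; rewrite inE => /orP[] aY st; [left|right]; apply/existsP; exists a; rewrite aY.
by case=> /existsP[a /andP[aY st]]; exists a; rewrite inE aY ?orbT.
Qed.

Lemma reach_sub Y Z s t : Y \subset Z -> reach R Y s t -> reach R Z s t.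
Proof.
move=> YZ; apply: connect_sub => u v /existsP[a /andP[aY st]].
by apply: connect1; apply/existsP; exists a; rewrite (subsetP YZ _ aY).
Qed.

Lemma Omega_closed Z W (S' : {set St Sa}) s t :
  Z \subset W -> s \in Omega R W S' -> reach R Z s t -> t \in Omega R W S'.
Proof.
move=> ZW; rewrite !inE => /existsP[x /andP[xS xs]] st.
apply/existsP; exists x; rewrite xS /=; apply: connect_trans xs _.
exact: reach_sub st.
Qed.

Lemma rec_closed X s t : recb X s -> reach R X s t -> recb X t.
Proof.
move=> /recP H st; apply/recP => u tu.
have su := connect_trans st tu.
exact: connect_trans (H _ su) st.
Qed.

Lemma Psi_closed X (S' : {set St Sa}) s t : s \in Psi R X S' -> reach R X s t -> t \in Psi R X S'.
Proof.
rewrite !inPsi => /andP[sO sr] st.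
by rewrite (Omega_closed (subxx _) sO st) (rec_closed sr st).
Qed.

Lemma Omega_Omega W (S' : {set St Sa}) : Omega R W (Omega R W S') = Omega R W S'.
Proof.
apply/setP => s; apply/idP/idP.
  rewrite [s \in Omega R W (Omega R W S')]inE => /existsP[x /andP[xO xs]].
  exact: Omega_closed (subxx _) xO xs.
by move=> sO; rewrite inE; apply/existsP; exists s; rewrite sO /reach /creach !connect0.
Qed.

Lemma Psi_Omega W (S' : {set St Sa}) : Psi R W (Omega R W S') = Psi R W S'.
Proof. by apply/setP => s; rewrite !inPsi Omega_Omega. Qed.

Lemma in_cls Y p s : (s \in cls R Y p) = reach R Y p s && reach R Y s p.
Proof. by rewrite inE. Qed.

Lemma cls_refl Y s : s \in cls R Y s.
Proof. by rewrite in_cls /reach /creach !connect0. Qed.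

Lemma cls_eq Y u v : reach R Y u v -> reach R Y v u -> cls R Y u = cls R Y v.
Proof.
move=> uv vu; apply/setP => w; rewrite !in_cls; apply/andP/andP => [[a b]|[a b]].
  by split; [apply: connect_trans vu a | apply: connect_trans b uv].
by split; [apply: connect_trans uv a | apply: connect_trans b vu].
Qed.

Lemma cls_mem_eq Y p s : s \in cls R Y p -> cls R Y s = cls R Y p.
Proof. by rewrite in_cls => /andP[ps sp]; apply: cls_eq. Qed.

Lemma cls_in_setT Y s : cls R Y s \in clsset R Y setT.
Proof. by apply: imset_f; rewrite inE. Qed.

Lemma clssetP Y P c : reflect (exists2 p, p \in P & c = cls R Y p) (c \in clsset R Y P).
Proof. exact: imsetP. Qed.

Lemma creach_lift Y X w0 c u v :
  creach R Y X (cls R Y w0) c -> u \in cls R Y w0 -> v \in c -> reach R (Y :|: X) u v.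
Proof.
move=> cr uc.
have H : c \in [set c' : {set St Sa} | [forall v' : St Sa, (v' \in c') ==> reach R (Y :|: X) u v']].
  apply: (connect_closed_sub _ _ cr).
    move=> c1 c2; rewrite !inE => /forallP H1 /and3P[_ /clssetP[w' _ ->]].
    move=> /existsP[a /andP[ac1 /existsP[b /andP[bc2 ab]]]].
    apply/forallP => v'; apply/implyP => v'c.
    have ua := implyP (H1 a) ac1.
    apply: connect_trans ua _; apply: (@connect_trans _ _ b).
      by apply: connect1; rewrite stepXU ab orbT.
    move: bc2 v'c; rewrite !in_cls => /andP[_ bw] /andP[wv _].
    by apply: reach_sub (subsetUl _ _) _; apply: connect_trans bw wv.
  rewrite inE; apply/forallP => v'; apply/implyP.
  move: uc; rewrite !in_cls => /andP[_ uw] /andP[wv _].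
  by apply: reach_sub (subsetUl _ _) _; apply: connect_trans uw wv.
by move=> vc; move: H; rewrite inE => /forallP/(_ v)/implyP; apply.
Qed.

Lemma Yrec_step Y s t : recb Y s -> stepX R Y s t -> reach R Y t s.
Proof. by move=> /recP H st; apply: H; apply: connect1. Qed.

Lemma reach_creach Y X t s :
  reach R (Y :|: X) t s -> (forall w, reach R (Y :|: X) t w -> recb Y w) ->
  creach R Y X (cls R Y t) (cls R Y s).
Proof.
move=> ts Hr.
have : s \in [set w | reach R (Y :|: X) t w && creach R Y X (cls R Y t) (cls R Y w)].
  apply: (connect_closed_sub _ _ ts); last by rewrite inE /reach /creach !connect0.
  move=> u v; rewrite !inE => /andP[tu cu] uv.
  have tv : reach R (Y :|: X) t v by apply: connect_trans tu (connect1 uv).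
  rewrite tv /=; move: uv; rewrite stepXU => /orP[uv|uv].
    by rewrite (@cls_eq Y v u) //; solve [apply: (Yrec_step (Hr _ tu) uv) | apply: connect1 uv].
  apply: connect_trans cu (connect1 _).
  rewrite /cstep !cls_in_setT /=; apply/existsP; exists u; rewrite cls_refl /=.
  by apply/existsP; exists v; rewrite cls_refl.
by rewrite inE => /andP[].
Qed.

Lemma main_step Y X (Om : {set St Sa}) :
  (forall s t, s \in Om -> reach R (Y :|: X) s t -> t \in Om) ->
  Mrel R Y X ->
  Flatten (tPsi R X Y (Psi R Y Om)) = Psi R (Y :|: X) Om.
Proof.
move=> Omc HM.
set P := Psi R Y Om; set Q := Psi R (Y :|: X) Om.
have OmO : forall W, W \subset Y :|: X -> Omega R W Om = Om.
  move=> W WZ; apply/setP => s; apply/idP/idP.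
    by rewrite inE => /existsP[x /andP[xO xs]]; apply: Omc xO (reach_sub WZ xs).
  by move=> sO; rewrite inE; apply/existsP; exists s; rewrite sO /reach /creach !connect0.
have QP : Q \subset P.
  apply/subsetP => s sQ.
  have [t [st trec]] := exists_rec (stepX R Y) s.
  set T := Psi R Y Q.
  have tT : t \in T.
    rewrite inPsi; apply/andP; split; last by apply/recP.
    rewrite inE; apply/existsP; exists t; rewrite /reach /creach !connect0 andbT.
    exact: Psi_closed sQ (reach_sub (subsetUl _ _) st).
  have := sQ; rewrite inPsi => /andP[sO /recP sr].
  have ts : reach R (Y :|: X) t s by apply: sr; apply: reach_sub (subsetUl _ _) st.
  have sT : s \in T.
    apply: (connect_closed_sub _ tT ts) => u v uT; rewrite stepXU => /orP[uv|uv].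
      exact: Psi_closed uT (connect1 uv).
    have := HM Om; rewrite -/Q -/T => /subsetP; apply.
    by rewrite inE; apply/existsP; exists u; rewrite uT.
  move: sT; rewrite !inPsi => /andP[sO' ->]; rewrite andbT.
  move: sO'; rewrite inE => /existsP[q /andP[qQ qs]].
  rewrite OmO ?subsetUl //; move: qQ; rewrite inPsi OmO // => /andP[qO _].
  exact: Omc qO (reach_sub (subsetUl _ _) qs).
have Qcl : forall s t, s \in Q -> reach R (Y :|: X) s t -> t \in Q.
  by move=> s t sQ st; apply: Psi_closed sQ st.
have QPrec : forall s, s \in Q -> recb Y s.
  by move=> s /(subsetP QP); rewrite inPsi => /andP[].
apply/setP => s; apply/idP/idP.
- case/bigcupP => e; rewrite inE => /andP[/clssetP[p pP ->]] /andP[/forallP H1 /forall_inP H2] sp.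
  have sP : s \in P by apply: Psi_closed pP _; move: sp; rewrite in_cls => /andP[].
  have ep : cls R Y s = cls R Y p by apply: cls_mem_eq.
  rewrite inPsi; apply/andP; split.
    by move: sP; rewrite inPsi OmO ?subsetUl // => /andP[]; rewrite OmO.
  apply/recP => t st.
  set W := [set w | (w \in P) && creach R Y X (cls R Y s) (cls R Y w)].
  have memW : forall w, (w \in W) = (w \in P) && creach R Y X (cls R Y s) (cls R Y w).
    by move=> w; rewrite /W inE.
  have : t \in W.
    apply: (connect_closed_sub _ _ st); last by rewrite memW sP /reach /creach !connect0.
    move=> u v; rewrite !memW => /andP[uP cu]; rewrite stepXU => /orP[uv|uv].
      have vP := Psi_closed uP (connect1 uv).
      have urec : recb Y u by move: uP; rewrite inPsi => /andP[].
      by rewrite vP (@cls_eq Y v u) //; solve [apply: (Yrec_step urec uv) | apply: connect1 uv].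
    have cv : creach R Y X (cls R Y s) (cls R Y v).
      apply: connect_trans cu (connect1 _).
      rewrite /cstep !cls_in_setT /=; apply/existsP; exists u; rewrite cls_refl /=.
      by apply/existsP; exists v; rewrite cls_refl.
    rewrite cv andbT.
    have := implyP (H1 (cls R Y v)); rewrite -ep => /(_ cv) /clssetP[p' p'P e'].
    have : v \in cls R Y p' by rewrite -e' cls_refl.
    by rewrite in_cls => /andP[pv _]; apply: Psi_closed p'P pv.
  rewrite memW => /andP[_ cst].
  have := H2 (cls R Y t) (cls_in_setT _ _); rewrite -ep => /implyP/(_ cst) cts.
  exact: creach_lift cts (cls_refl _ _) (cls_refl _ _).
- move=> sQ; apply/bigcupP; exists (cls R Y s); last exact: cls_refl.
  have sP := subsetP QP _ sQ.
  have K1 : forall e', creach R Y X (cls R Y s) e' ->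
      exists2 t, t \in Q & (e' = cls R Y t) /\ reach R (Y :|: X) s t.
    move=> e' se'.
    have : e' \in [set c | [exists t in Q, (c == cls R Y t) && reach R (Y :|: X) s t]].
      apply: (connect_closed_sub _ _ se'); last first.
        by rewrite inE; apply/existsP; exists s; rewrite sQ eqxx /reach /creach !connect0.
      move=> c1 c2; rewrite !inE => /existsP[t /and3P[tQ /eqP -> stt]].
      case/and3P => _ /clssetP[w _ ->] /existsP[a /andP[aT /existsP[b /andP[bw ab]]]].
      have sb : reach R (Y :|: X) s b.
        apply: (connect_trans stt); apply: (@connect_trans _ _ a).
          by move: aT; rewrite in_cls => /andP[ta _]; apply: reach_sub (subsetUl _ _) ta.
        by apply: connect1; rewrite stepXU ab orbT.
      apply/existsP; exists b; rewrite sb andbT (Qcl _ _ sQ sb) /=.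
      by rewrite (cls_mem_eq bw).
    by rewrite inE => /existsP[t /and3P[tQ /eqP -> stt]]; exists t.
  rewrite inE; apply/andP; split; first by apply: imset_f.
  apply/andP; split.
    apply/forallP => e'; apply/implyP => /K1[t tQ [-> _]].
    by apply: imset_f; apply: (subsetP QP).
  apply/forall_inP => e' _; apply/implyP => /K1[t tQ [-> st]].
  apply: reach_creach.
    by move: sQ; rewrite inPsi => /andP[_ /recP]; apply.
  by move=> w tw; apply: QPrec; apply: Qcl tQ tw.
Qed.

Lemma compAux_correct (r : seq {set A}) Y (Om : {set St Sa}) :
  (forall s t, s \in Om -> reach R (Y :|: \bigcup_(X <- r) X) s t -> t \in Om) ->
  (forall i, i < size r -> Mrel R (Y :|: \bigcup_(X <- take i r) X) (nth set0 r i)) ->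
  compAux R Y r (Psi R Y Om) = Psi R (Y :|: \bigcup_(X <- r) X) Om.
Proof.
elim: r Y => [|X r IH] Y Omc HM /=; first by rewrite big_nil setU0.
have M0 := HM 0 isT; rewrite /= big_nil setU0 in M0.
rewrite main_step //; last first.
  move=> s t sO st; apply: Omc sO _; apply: reach_sub st.
  by rewrite big_cons setUS // subsetUl.
rewrite IH; first by rewrite big_cons setUA.
  by move=> s t sO st; apply: Omc sO _; rewrite big_cons setUA.
move=> i ir; have := HM i.+1 ir; by rewrite /= big_cons setUA.
Qed.

End S.

Theorem theorem2 (A : finType) (Sa : A -> finType)
  (hSa : forall a : A, 0 < #|Sa a|)
  (R : forall a : A, rel (St Sa))
  (hR : forall a : A, (forall s s', ~~ R a s s') \/ (forall s, exists s', R a s s'))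
  (hloc : forall (a : A) (s s' : St Sa), R a s s' ->
            s = s' \/ (forall b : A, b != a -> s b = s' b))
  (Xs : seq {set A})
  (hm : 0 < size Xs)
  (hne : forall i, i < size Xs -> nth set0 Xs i != set0)
  (hdisj : forall i j, i < j -> j < size Xs ->
            [disjoint nth set0 Xs i & nth set0 Xs j])
  (hM : forall i, i < size Xs ->
          Mrel R (\bigcup_(X <- take i Xs) X) (nth set0 Xs i))
  (S' : {set St Sa}) :
  Psi R (\bigcup_(X <- Xs) X) S' =
  compPsi R Xs (Omega R (\bigcup_(X <- Xs) X) S').
Proof.
clear hne hdisj; case: Xs hm hM => [//|X1 r] _ hM /=.
rewrite compAux_correct.
- by rewrite big_cons Psi_Omega.
- move=> s t sO st; apply: Omega_closed (subxx _) sO _; by rewrite big_cons.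
- by move=> i ir; have := hM i.+1 ir; rewrite /= big_cons.
Qed.
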